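(* Let $\omega_N=\{x_1,\dots,x_N\}\subset\mathbb{S}^2\setminus\{(0,0,1)\}$ be pairwise distinct points, $z_i=\pi_{\mathbb{S}^2}(x_i)$, and $p_N(x)=\prod_{i=1}^N(x-z_i)$. Then $$\mathcal{E}_{\log}(\omega_N)=\sum_{i=1}^N\log\mu_{\rm norm}(p_N,z_i)+N\log\Big(\frac{\prod_{i=1}^N\sqrt{1+|z_i|^2}}{\|p_N\|}\Big)-N^2\log 2-\frac{N\log N}{2}+N\log 2.$$
   Context: $\mathbb{S}^2$ is the unit sphere in $\mathbb{R}^3$; $\pi_{\mathbb{S}^2}(a,b,c)=\frac{a+ib}{1-c}$. $\mathcal{E}_{\log}(\{x_1,\dots,x_N\})=-\sum_{i\ne j}\log\|x_i-x_j\|$. $\|\sum_{i=0}^N a_iz^i\|=(\sum_i\binom{N}{i}^{-1}|a_i|^2)^{1/2}$ is the Bombieri–Weyl norm, and for a root $z$ of degree-$N$ polynomial $P$, $\mu_{\rm norm}(P,z)=N^{1/2}\|P\|(1+|z|^2)^{N/2-1}/|P'(z)|$. *)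

(* Defs.v *)
From Stdlib Require Import Reals List.
Import ListNotations.
Open Scope R_scope.

Definition Cx : Type := (R * R)%type.
Definition C0 : Cx := (0, 0).
Definition C1 : Cx := (1, 0).
Definition Cadd (u v : Cx) : Cx := (fst u + fst v, snd u + snd v).
Definition Copp (u : Cx) : Cx := (- fst u, - snd u).
Definition Cmul (u v : Cx) : Cx :=
  (fst u * fst v - snd u * snd v, fst u * snd v + snd u * fst v).
Definition Crscale (r : R) (u : Cx) : Cx := (r * fst u, r * snd u).
Definition Cnorm2 (u : Cx) : R := fst u ^ 2 + snd u ^ 2.
Definition Cabs (u : Cx) : R := sqrt (Cnorm2 u).

Definition R3 : Type := (R * R * R)%type.
Definition on_sphere (p : R3) : Prop :=
  let '(a, b, c) := p in a ^ 2 + b ^ 2 + c ^ 2 = 1.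
Definition north_pole : R3 := (0, 0, 1).
Definition dist3 (p q : R3) : R :=
  let '(a, b, c) := p in let '(a', b', c') := q in
  sqrt ((a - a') ^ 2 + (b - b') ^ 2 + (c - c') ^ 2).

Definition stereo (p : R3) : Cx :=
  let '(a, b, c) := p in (a / (1 - c), b / (1 - c)).

Fixpoint rsum (n : nat) (f : nat -> R) : R :=
  match n with O => 0 | S m => rsum m f + f m end.
Fixpoint rprod (n : nat) (f : nat -> R) : R :=
  match n with O => 1 | S m => rprod m f * f m end.

Definition Elog (N : nat) (x : nat -> R3) : R :=
  - rsum N (fun i => rsum N (fun j =>
      if Nat.eqb i j then 0 else ln (dist3 (x i) (x j)))).

(** Polynomials with complex coefficients, as coefficient lists in
    ascending order: [a0; a1; ...] represents sum a_i X^i. *)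
Definition poly := list Cx.
Fixpoint Padd (p q : poly) : poly :=
  match p, q with
  | [], _ => q
  | _, [] => p
  | a :: p', b :: q' => Cadd a b :: Padd p' q'
  end.
Definition Pscale (c : Cx) (p : poly) : poly := map (Cmul c) p.
Definition PmulX (p : poly) : poly := C0 :: p.
Definition Pmul_lin (z : Cx) (p : poly) : poly := Padd (PmulX p) (Pscale (Copp z) p).
Definition Peval (p : poly) (x : Cx) : Cx :=
  fold_right (fun a acc => Cadd a (Cmul x acc)) C0 p.
Fixpoint Pderiv_aux (k : nat) (p : poly) : poly :=
  match p with [] => [] | a :: q => Crscale (INR k) a :: Pderiv_aux (S k) q end.
Definition Pderiv (p : poly) : poly := Pderiv_aux 1 (tl p).
Definition coef (p : poly) (i : nat) : Cx := nth i p C0.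

Fixpoint poly_of_roots (z : nat -> Cx) (N : nat) : poly :=
  match N with O => [C1] | S n => Pmul_lin (z n) (poly_of_roots z n) end.

Definition bw_norm (N : nat) (p : poly) : R :=
  sqrt (rsum (S N) (fun i => Cnorm2 (coef p i) / Binomial.C N i)).

Definition mu_norm (N : nat) (p : poly) (z : Cx) : R :=
  sqrt (INR N) * bw_norm N p * Rpower (1 + Cnorm2 z) (INR N / 2 - 1)
  / Cabs (Peval (Pderiv p) z).

(* Main.v *)
Require Import Defs.
From Stdlib Require Import Reals List Lra Lia Psatz.
Import ListNotations.
Open Scope R_scope.

Lemma rsum_ext n f g : (forall j, (j < n)%nat -> f j = g j) -> rsum n f = rsum n g.
Proof. induction n; simpl; intros H; auto. rewrite IHn by (intros; apply H; lia). rewrite H by lia. auto. Qed.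
Lemma rprod_ext n f g : (forall j, (j < n)%nat -> f j = g j) -> rprod n f = rprod n g.
Proof. induction n; simpl; intros H; auto. rewrite IHn by (intros; apply H; lia). rewrite H by lia. auto. Qed.
Lemma rsum_lin n a b c f g : rsum n (fun i => a + b * f i + c * g i) = INR n * a + b * rsum n f + c * rsum n g.
Proof. induction n; [simpl; ring|]. cbn [rsum]. rewrite IHn, S_INR. ring. Qed.
Lemma rsum_neq n f i : (i < n)%nat -> rsum n (fun j => if Nat.eqb i j then 0 else f j) = rsum n f - f i.
Proof.
  induction n; intros H; [lia|]. simpl.
  destruct (Nat.eq_dec i n) as [->|Hne].
  - rewrite Nat.eqb_refl. rewrite (rsum_ext n _ f). ring.
    intros j Hj. destruct (Nat.eqb_spec n j); [lia|auto].
  - rewrite IHn by lia. destruct (Nat.eqb_spec i n); [lia|]. ring.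
Qed.
Lemma rprod_pos n f : (forall j, (j < n)%nat -> 0 < f j) -> 0 < rprod n f.
Proof. induction n; simpl; intros H; [lra|]. apply Rmult_lt_0_compat; auto. Qed.
Lemma ln_rprod n f : (forall j, (j < n)%nat -> 0 < f j) -> ln (rprod n f) = rsum n (fun j => ln (f j)).
Proof. induction n; simpl; intros H; [apply ln_1|]. rewrite ln_mult; [rewrite IHn; auto| apply rprod_pos; intros; apply H; lia| apply H; lia]. Qed.

Ltac cring := unfold Cadd, Cmul, Copp, Crscale, C0, Defs.C1, Cnorm2; simpl; f_equal; ring.
Lemma Cnorm2_mul u v : Cnorm2 (Cmul u v) = Cnorm2 u * Cnorm2 v.
Proof. destruct u, v; unfold Cnorm2, Cmul; simpl; ring. Qed.
Lemma Cnorm2_ge0 u : 0 <= Cnorm2 u.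
Proof. destruct u; unfold Cnorm2; simpl; nra. Qed.

Lemma Peval_add p q x : Peval (Padd p q) x = Cadd (Peval p x) (Peval q x).
Proof. revert q; induction p; intros q; destruct q; simpl; try cring.
  rewrite IHp. destruct a, c. unfold Cadd, Cmul; simpl. f_equal; ring. Qed.
Lemma Peval_scale c p x : Peval (Pscale c p) x = Cmul c (Peval p x).
Proof. induction p; simpl; [cring|]. rewrite IHp. destruct (Peval p x), a, c, x. cring. Qed.
Lemma Peval_lin w p x : Peval (Pmul_lin w p) x = Cmul (Cadd x (Copp w)) (Peval p x).
Proof. unfold Pmul_lin. rewrite Peval_add, Peval_scale. unfold PmulX. simpl.
  destruct (Peval p x), w, x. cring. Qed.

Definition PD k p x := Peval (Pderiv_aux k p) x.
Lemma PD_add k p q x : PD k (Padd p q) x = Cadd (PD k p x) (PD k q x).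
Proof. unfold PD. revert q k; induction p; intros q k; destruct q; simpl; try cring.
  rewrite IHp. destruct (Peval (Pderiv_aux (S k) p) x), (Peval (Pderiv_aux (S k) q) x), a, c, x. cring. Qed.
Lemma PD_scale k c p x : PD k (Pscale c p) x = Cmul c (PD k p x).
Proof. unfold PD. revert k; induction p; intros k; simpl; [cring|].
  rewrite IHp. destruct (Peval (Pderiv_aux (S k) p) x), a, c, x. cring. Qed.
Lemma PD_S k p x : PD (S k) p x = Cadd (PD k p x) (Peval p x).
Proof. unfold PD. revert k; induction p; intros k; simpl; [cring|].
  rewrite IHp. change (match k with 0%nat => 1 | S _ => INR k + 1 end) with (INR (S k)). rewrite S_INR. destruct (Peval (Pderiv_aux (S k) p) x), (Peval p x), a, x. cring. Qed.
Lemma PD_0 p x : PD 0 p x = Cmul x (Peval (Pderiv p) x).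
Proof. unfold PD, Pderiv. destruct p; simpl; [destruct x; cring|].
  destruct (Peval (Pderiv_aux 1 p) x), c, x. cring. Qed.
Lemma Pderiv_lin w p x : Peval (Pderiv (Pmul_lin w p)) x =
  Cadd (Peval p x) (Cmul (Cadd x (Copp w)) (Peval (Pderiv p) x)).
Proof.
  destruct p as [|a q].
  - unfold Pmul_lin, Pderiv, Pscale, PmulX; simpl. destruct x, w; cring.
  - unfold Pderiv at 1, Pmul_lin.
    replace (tl (Padd (PmulX (a::q)) (Pscale (Copp w) (a::q)))) with (Padd (a::q) (Pscale (Copp w) q)) by reflexivity.
    change (Peval (Pderiv_aux 1 (Padd (a :: q) (Pscale (Copp w) q))) x) with
      (PD 1 (Padd (a :: q) (Pscale (Copp w) q)) x).
    rewrite PD_add, PD_scale, PD_S, PD_0. unfold Pderiv; simpl tl. unfold PD.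
    destruct (Peval (Pderiv_aux 1 q) x), (Peval (a :: q) x), x, w. cring.
Qed.
Lemma roots_norm z n x : Cnorm2 (Peval (poly_of_roots z n) x) = rprod n (fun j => Cnorm2 (Cadd x (Copp (z j)))).
Proof. induction n; simpl.
  - unfold Cnorm2, Defs.C1, C0; simpl. destruct x; simpl; ring.
  - rewrite Peval_lin, Cnorm2_mul, IHn. ring. Qed.
Lemma roots_zero z n i : (i < n)%nat -> Peval (poly_of_roots z n) (z i) = C0.
Proof. induction n; intros H; [lia|]. simpl. rewrite Peval_lin.
  destruct (Nat.eq_dec i n) as [->|Hne].
  - destruct (Peval (poly_of_roots z n) (z n)), (z n). cring.
  - rewrite IHn by lia. destruct (z i), (z n). cring. Qed.
Lemma roots_deriv z n i : (i < n)%nat ->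
  Cnorm2 (Peval (Pderiv (poly_of_roots z n)) (z i)) =
  rprod n (fun j => if Nat.eqb i j then 1 else Cnorm2 (Cadd (z i) (Copp (z j)))).
Proof. induction n; intros H; [lia|]. simpl poly_of_roots. rewrite Pderiv_lin. cbn [rprod].
  destruct (Nat.eq_dec i n) as [->|Hne].
  - rewrite Nat.eqb_refl.
    replace (Cadd (Peval (poly_of_roots z n) (z n)) (Cmul (Cadd (z n) (Copp (z n))) (Peval (Pderiv (poly_of_roots z n)) (z n))))
      with (Peval (poly_of_roots z n) (z n)) by (destruct (Peval (poly_of_roots z n) (z n)), (Peval (Pderiv (poly_of_roots z n)) (z n)), (z n); cring).
    rewrite roots_norm. rewrite Rmult_1_r. apply rprod_ext. intros j Hj.
    destruct (Nat.eqb_spec n j); [lia|auto].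
  - rewrite roots_zero by lia. destruct (Nat.eqb_spec i n); [lia|].
    replace (Cadd C0 (Cmul (Cadd (z i) (Copp (z n))) (Peval (Pderiv (poly_of_roots z n)) (z i))))
      with (Cmul (Cadd (z i) (Copp (z n))) (Peval (Pderiv (poly_of_roots z n)) (z i)))
      by (destruct (Peval (Pderiv (poly_of_roots z n)) (z i)), (z i), (z n); cring).
    rewrite Cnorm2_mul, IHn by lia. ring. Qed.

Lemma coef_add p q k : coef (Padd p q) k = Cadd (coef p k) (coef q k).
Proof. unfold coef. revert q k; induction p; intros q k; destruct q, k; simpl; try cring;
  try (destruct (nth k q C0); cring); try (destruct (nth k p C0); cring); try (destruct c; cring); try (destruct a; cring).
  apply IHp. Qed.
Lemma coef_scale c p k : coef (Pscale c p) k = Cmul c (coef p k).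
Proof. unfold coef. revert k; induction p; intros k; destruct k; simpl; try cring; auto. Qed.
Lemma coef_lin w p k : coef (Pmul_lin w p) (S k) = Cadd (coef p k) (Cmul (Copp w) (coef p (S k))).
Proof. unfold Pmul_lin. rewrite coef_add, coef_scale. reflexivity. Qed.
Lemma coef_roots_high z n k : (n < k)%nat -> coef (poly_of_roots z n) k = C0.
Proof. revert k; induction n; intros k H.
  - destruct k; [lia|]. unfold coef; simpl. destruct k; reflexivity.
  - destruct k; [lia|]. simpl. rewrite coef_lin, !IHn by lia. destruct (z n). cring. Qed.
Lemma coef_roots_top z n : coef (poly_of_roots z n) n = Defs.C1.
Proof. induction n; [reflexivity|]. simpl. rewrite coef_lin, IHn, coef_roots_high by lia. destruct (z n). cring. Qed.

Lemma rsum_nonneg n f : (forall j, (j < n)%nat -> 0 <= f j) -> 0 <= rsum n f.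
Proof. induction n; simpl; intros H; [lra|]. assert (0 <= f n) by (apply H; lia). assert (0 <= rsum n f) by (apply IHn; intros; apply H; lia). lra. Qed.
Lemma binom_pos n i : (i <= n)%nat -> 0 < Binomial.C n i.
Proof. intros. unfold Binomial.C. apply Rdiv_lt_0_compat; [apply INR_fact_lt_0|].
  apply Rmult_lt_0_compat; apply INR_fact_lt_0. Qed.
Lemma bw_pos z n : 0 < bw_norm n (poly_of_roots z n).
Proof. unfold bw_norm. apply sqrt_lt_R0. cbn [rsum]. rewrite coef_roots_top.
  assert (0 <= rsum n (fun i => Cnorm2 (coef (poly_of_roots z n) i) / Binomial.C n i)).
  { apply rsum_nonneg. intros j Hj. apply Rmult_le_pos; [apply Cnorm2_ge0|apply Rlt_le, Rinv_0_lt_compat, binom_pos; lia]. }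
  assert (0 < Cnorm2 Defs.C1 / Binomial.C n n).
  { apply Rdiv_lt_0_compat; [unfold Cnorm2, Defs.C1; simpl; lra| apply binom_pos; lia]. }
  lra. Qed.
Lemma sph_c a b c : a^2+b^2+c^2 = 1 -> (a,b,c) <> north_pole -> 0 < 1 - c.
Proof. intros H Hn. destruct (Rlt_dec c 1) as [h|h]; [lra|].
  exfalso. apply Hn. unfold north_pole. assert (c = 1) by nra.
  assert (a = 0) by nra. assert (b = 0) by nra. subst. reflexivity. Qed.
Lemma sphere_dist p q : on_sphere p -> on_sphere q -> p <> north_pole -> q <> north_pole ->
  dist3 p q = sqrt (4 * Cnorm2 (Cadd (stereo p) (Copp (stereo q))) /
    ((1 + Cnorm2 (stereo p)) * (1 + Cnorm2 (stereo q)))).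
Proof.
  destruct p as [[a b] c], q as [[a' b'] c']. unfold on_sphere. intros H1 H2 N1 N2.
  pose proof (sph_c _ _ _ H1 N1) as U. pose proof (sph_c _ _ _ H2 N2) as V.
  unfold dist3, stereo, Cnorm2, Cadd, Copp; cbn [fst snd]. f_equal.
  set (u := 1 - c) in *. set (v := 1 - c') in *.
  assert (E1 : 1 + ((a/u)^2 + (b/u)^2) = 2/u).
  { field_simplify_eq; [unfold u; nra|lra]. }
  assert (E2 : 1 + ((a'/v)^2 + (b'/v)^2) = 2/v).
  { field_simplify_eq; [unfold v; nra|lra]. }
  rewrite E1, E2.
  replace ((a / u + - (a' / v)) ^ 2 + (b / u + - (b' / v)) ^ 2) with
    (((a*v - a'*u)^2 + (b*v-b'*u)^2)/(u^2*v^2)) by (field; lra).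
  replace ((a*v - a'*u)^2 + (b*v-b'*u)^2) with (v^2*(a^2+b^2) + u^2*(a'^2+b'^2) - 2*u*v*(a*a'+b*b')) by ring.
  replace (a^2+b^2) with (1 - c^2) by lra. replace (a'^2+b'^2) with (1 - c'^2) by lra.
  replace ((a - a') ^ 2 + (b - b') ^ 2 + (c - c') ^ 2) with (2 - 2*(a*a'+b*b'+c*c')) by nra.
  unfold u, v. field. unfold u, v in *; split; lra.
Qed.
Lemma sq0 x : x^2 = 0 -> x = 0.
Proof. intros H. nra. Qed.
Lemma ln_sqrt' y : 0 < y -> ln (sqrt y) = ln y / 2.
Proof. intros H. rewrite <- Rpower_sqrt by auto. rewrite ln_Rpower. field. Qed.
Lemma ln_div' a b : 0 < a -> 0 < b -> ln (a / b) = ln a - ln b.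
Proof. intros. unfold Rdiv. rewrite ln_mult, ln_Rinv; [ring|auto|auto|apply Rinv_0_lt_compat; auto]. Qed.

Lemma cn_pos p q : on_sphere p -> on_sphere q -> p <> north_pole -> q <> north_pole -> p <> q ->
  0 < Cnorm2 (Cadd (stereo p) (Copp (stereo q))).
Proof. intros H1 H2 N1 N2 Hne.
  destruct (Cnorm2_ge0 (Cadd (stereo p) (Copp (stereo q)))) as [h|h]; auto. exfalso.
  pose proof (sphere_dist p q H1 H2 N1 N2) as E. rewrite <- h in E.
  replace (4 * 0 / ((1 + Cnorm2 (stereo p)) * (1 + Cnorm2 (stereo q)))) with 0 in E by (unfold Rdiv; ring).
  rewrite sqrt_0 in E. apply Hne.
  destruct p as [[a b] c], q as [[a' b'] c']. unfold dist3 in E. apply sqrt_eq_0 in E; [|apply Rplus_le_le_0_compat; [apply Rplus_le_le_0_compat|]; apply pow2_ge_0].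
  pose proof (pow2_ge_0 (a-a')); pose proof (pow2_ge_0 (b-b')); pose proof (pow2_ge_0 (c-c')).
  assert ((a-a')^2 = 0) by lra. assert ((b-b')^2 = 0) by lra. assert ((c-c')^2 = 0) by lra.
  apply sq0 in H4, H5, H6. replace a' with a by lra. replace b' with b by lra. replace c' with c by lra. reflexivity. Qed.

Lemma ln_dist p q : on_sphere p -> on_sphere q -> p <> north_pole -> q <> north_pole -> p <> q ->
  ln (dist3 p q) = ln 2 + ln (Cnorm2 (Cadd (stereo p) (Copp (stereo q)))) / 2
     - ln (1 + Cnorm2 (stereo p)) / 2 - ln (1 + Cnorm2 (stereo q)) / 2.
Proof. intros H1 H2 N1 N2 Hne. pose proof (cn_pos p q H1 H2 N1 N2 Hne) as P.
  pose proof (Cnorm2_ge0 (stereo p)). pose proof (Cnorm2_ge0 (stereo q)).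
  rewrite (sphere_dist p q H1 H2 N1 N2). rewrite ln_sqrt'.
  2:{ apply Rdiv_lt_0_compat; [lra|apply Rmult_lt_0_compat; lra]. }
  rewrite ln_div', !ln_mult by (try apply Rmult_lt_0_compat; lra).
  replace 4 with (2*2) by ring. rewrite ln_mult by lra. field. Qed.
Theorem lemma4p1 (N : nat) (x : nat -> R3)
  (Hsph : forall i, (i < N)%nat -> on_sphere (x i))
  (Hnp : forall i, (i < N)%nat -> x i <> north_pole)
  (Hdist : forall i j, (i < N)%nat -> (j < N)%nat -> i <> j -> x i <> x j) :
  let z := fun i => stereo (x i) in
  let p := poly_of_roots z N in
  Elog N x =
    rsum N (fun i => ln (mu_norm N p (z i)))
    + INR N * ln (rprod N (fun i => sqrt (1 + Cnorm2 (z i))) / bw_norm N p)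
    - INR N ^ 2 * ln 2
    - INR N * ln (INR N) / 2
    + INR N * ln 2.
Proof.
  intros z p.
  set (Sg := fun i => ln (1 + Cnorm2 (z i))).
  set (D := fun i j => ln (Cnorm2 (Cadd (z i) (Copp (z j))))).
  set (E := fun i => rsum N (D i) - D i i).
  set (T := rsum N Sg).
  set (Bn := bw_norm N p).
  assert (HB : 0 < Bn) by apply bw_pos.
  assert (Hpos : forall i j, (i < N)%nat -> (j < N)%nat -> i <> j -> 0 < Cnorm2 (Cadd (z i) (Copp (z j)))).
  { intros i j Hi Hj Hij. apply cn_pos; auto. }
  assert (HS : forall i, 0 < 1 + Cnorm2 (z i)) by (intros; pose proof (Cnorm2_ge0 (z i)); lra).
  assert (HE : Elog N x = - rsum N (fun i => ((INR N - 1) * ln 2 - T/2) + (1 - INR N / 2) * Sg i + (1/2) * E i)).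
  { unfold Elog. f_equal. apply rsum_ext. intros i Hi.
    rewrite (rsum_ext N _ (fun j => if Nat.eqb i j then 0 else
        (ln 2 - Sg i / 2) + (1/2) * D i j + (-1/2) * Sg j)).
    2:{ intros j Hj. destruct (Nat.eqb_spec i j); auto.
        rewrite ln_dist by auto. unfold Sg, D, z. field. }
    rewrite rsum_neq, rsum_lin by auto. unfold E, T. field. }
  destruct N as [|n].
  { rewrite HE. simpl. rewrite !Rmult_0_l. lra. }
  assert (HM : forall i, (i < S n)%nat -> ln (mu_norm (S n) p (z i)) =
     (ln (INR (S n)) / 2 + ln Bn) + (INR (S n) / 2 - 1) * Sg i + (-1/2) * E i).
  { intros i Hi. unfold mu_norm. fold Bn. unfold Cabs, p. rewrite roots_deriv by auto.
    pose proof (lt_0_INR (S n) ltac:(lia)) as HN.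
    assert (HP : 0 < rprod (S n) (fun j => if Nat.eqb i j then 1 else Cnorm2 (Cadd (z i) (Copp (z j))))).
    { apply rprod_pos. intros j Hj. destruct (Nat.eqb_spec i j); [lra|auto]. }
    rewrite ln_div', !ln_mult, ln_sqrt', ln_sqrt', ln_Rpower, ln_rprod; auto.
    2:{ intros j Hj. destruct (Nat.eqb_spec i j); [lra|auto]. }
    all: try apply sqrt_lt_R0; auto.
    all: try (unfold Rpower; apply exp_pos).
    all: try (apply Rmult_lt_0_compat; [apply Rmult_lt_0_compat|]; auto; try apply sqrt_lt_R0; auto; unfold Rpower; apply exp_pos).
    rewrite (rsum_ext _ _ (fun j => if Nat.eqb i j then 0 else D i j)).
    2:{ intros j Hj. destruct (Nat.eqb_spec i j); [apply ln_1|reflexivity]. }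
    2:{ apply Rmult_lt_0_compat; auto. apply sqrt_lt_R0; auto. }
    rewrite rsum_neq by auto. unfold E, Sg. field. }
  rewrite (rsum_ext _ _ _ HM), rsum_lin.
  rewrite ln_div', ln_rprod; auto.
  2:{ intros; apply sqrt_lt_R0; auto. }
  2:{ apply rprod_pos; intros; apply sqrt_lt_R0; auto. }
  rewrite (rsum_ext _ (fun j => ln (sqrt (1 + Cnorm2 (z j)))) (fun i => 0 + (1/2) * Sg i + 0 * Sg i)).
  2:{ intros j Hj. rewrite ln_sqrt' by auto. unfold Sg. field. }
  rewrite rsum_lin, HE, rsum_lin. fold T. fold Bn. clear HE HM. clearbody T Bn E. generalize (INR (S n)) (rsum (S n) E). intros r s. field.
Qed.
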